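(* Let $N\ge 3$ and let $(a_i)_{i\in\mathbb{Z}_{2N}}$ and $(\bar a_i)_{i\in\mathbb{Z}_{2N}}$ be positive real numbers (indices taken modulo $2N$) satisfying, for all $n\in\mathbb{Z}_N$, $$\bar a_{2n-1}+\bar a_{2n}=a_{2n}+a_{2n+1},\qquad \bar a_{2n}\bar a_{2n+1}=a_{2n+1}a_{2n+2}.$$ For $1\le k\le N$ define $$h_k(a)=\sum_{\substack{1\le i_1\triangleleft i_2\triangleleft\cdots\triangleleft i_k\le 2N\\ (i_1,i_k)\neq(1,2N)}} a_{i_1}a_{i_2}\cdots a_{i_k},$$ and $h_{N+1}(a)=\prod_{i=1}^{2N}a_i$. Then $h_k(\bar a)=h_k(a)$ for all $1\le k\le N+1$.
   Context: For integers $i,j$, $i\triangleleft j$ means $i+1<j$. The sum in $h_k$ runs over index tuples $1\le i_1<\dots<i_k\le 2N$ with consecutive indices differing by at least $2$, excluding tuples with $i_1=1$ and $i_k=2N$ simultaneously. The displayed equations are the evolution equations of the discrete periodic Toda lattice, with $a_i=a_i^t$, $\bar a_i=a_i^{t+1}$. *)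

(* Defs.v *)
From HB Require Import structures.
From mathcomp Require Import all_boot all_order all_algebra.
Set Implicit Arguments. Unset Strict Implicit. Unset Printing Implicit Defensive.
Import Order.TTheory GRing.Theory Num.Theory.
Local Open Scope ring_scope.

(* Sequences indexed by Z_{2N} are represented as 2N-periodic maps nat -> R;
   a i is a_i (index i read modulo 2N). *)
Definition periodic (R : Type) (N : nat) (a : nat -> R) : Prop :=
  forall i : nat, a (i + 2 * N)%N = a i.

(* Index tuple i_1 < ... < i_k in {1..2N} represented 0-based:
   an ordinal j : 'I_(2N) stands for the index j+1.
   Condition i_1 <| i_2 <| ... <| i_k (i.e. i_j + 1 < i_{j+1}),
   and (i_1, i_k) <> (1, 2N). *)
Definition admissible (N k : nat) (t : k.-tuple 'I_(2 * N)) : bool :=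
  let s := map (@nat_of_ord _) t in
  sorted (fun x y : nat => (x.+1 < y)%N) s &&
  ~~ ((nth 0%N s 0 == 0%N) && (last 0%N s == (2 * N).-1)).

Definition hsum (R : numDomainType) (N k : nat) (a : nat -> R) : R :=
  \sum_(t : k.-tuple 'I_(2 * N) | admissible t) \prod_(j <- t) a (nat_of_ord j).+1.

Definition h (R : numDomainType) (N k : nat) (a : nat -> R) : R :=
  if k == N.+1 then \prod_(i < 2 * N) a i.+1 else hsum N k a.

(* Main.v *)
Require Import Defs.
From HB Require Import structures.
From mathcomp Require Import all_boot all_order all_algebra.
From mathcomp Require Import ring zify.
Import Order.TTheory GRing.Theory Num.Theory.
Local Open Scope ring_scope.

Section Mats.
Variable S : comRingType.

Definition Tm (x u : S) : 'M[S]_2 :=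
  \matrix_(i, j) if (i : nat) == 1%N then (if (j : nat) == 1%N then 0 else u * x) else 1.
Definition Dm (x d : S) : 'M[S]_2 :=
  \matrix_(i, j) if i == j then 1 else if (i : nat) == 1%N then d * x else 0.

Lemma local_rel (x b1 b2 c1 c2 : S) : b1 * b2 = c1 * c2 ->
  Tm x b1 * Tm x b2 * Dm x (c2 - b2) = Dm x (b1 - c1) * (Tm x c1 * Tm x c2).
Proof.
move=> H; apply/matrixP => i j; rewrite -!mulmxE !mxE.
rewrite !big_ord_recl !big_ord0 !mxE.
rewrite !big_ord_recl !big_ord0 !mxE.
case: i => [[|[|i]] Hi] //; case: j => [[|[|j]] Hj] //=; rewrite ?mxE /=.
all: try ring.
apply/eqP; rewrite -subr_eq0; apply/eqP.
transitivity (x*x*(c1*c2 - b1*b2)); first ring.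
by rewrite H subrr mulr0.
Qed.

Lemma local_inv (x d : S) : Dm x d * Dm x (- d) = 1.
Proof.
apply/matrixP => i j; rewrite -!mulmxE !mxE.
rewrite !big_ord_recl !big_ord0 !mxE.
case: i => [[|[|i]] Hi] //; case: j => [[|[|j]] Hj] //=; rewrite ?mxE /=; ring.
Qed.
Lemma local_inv' (x d : S) : Dm x (- d) * Dm x d = 1.
Proof. by rewrite -{2}(opprK d) local_inv. Qed.
End Mats.
Section Gen.
Variable S : comRingType.

Lemma telescope (Pb P E : nat -> 'M[S]_2) n :
  (forall j, (j < n)%N -> Pb j * E j.+1 = E j * P j) ->
  (\prod_(j < n) Pb j) * E n = E 0%N * \prod_(j < n) P j.
Proof.
elim: n => [|n IH] H; first by rewrite !big_ord0 mul1r mulr1.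
rewrite !big_ord_recr /= -mulrA H // mulrA IH ?mulrA // => j Hj.
by apply: H; apply: ltnW.
Qed.

Lemma tr_conj (X Y E E' : 'M[S]_2) :
  X * E = E * Y -> E * E' = 1 -> E' * E = 1 -> \tr X = \tr Y.
Proof.
move=> H1 H2 H3.
have -> : X = E * (Y * E') by rewrite mulrA -H1 -mulrA H2 mulr1.
by rewrite -!mulmxE mxtrace_mulC -mulmxA !mulmxE H3 mulr1.
Qed.

Lemma tr_shift (F : nat -> 'M[S]_2) m : F 0%N = F m.+1 ->
  \tr (\prod_(i < m.+1) F i) = \tr (\prod_(i < m.+1) F i.+1).
Proof.
move=> H; rewrite big_ord_recl big_ord_recr /= -!mulmxE mxtrace_mulC H.
by congr (\tr (_ *m _)); apply: eq_bigr => i _.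
Qed.
End Gen.

Lemma prod_pair (R : ringType) (F : nat -> R) m :
  \prod_(i < 2 * m) F i = \prod_(j < m) (F (2 * j)%N * F (2 * j).+1).
Proof.
elim: m => [|m IH]; first by rewrite muln0 !big_ord0.
rewrite mulnSr addn2 !big_ord_recr /= IH mulrA.
by [].
Qed.

Lemma aux (R : comRingType) (x y z w : R) : z + y = x + w -> x - z = y - w.
Proof. by move=> H; transitivity ((x + w) - z - w); [ring | rewrite -H; ring]. Qed.

Definition Tp {R : comRingType} (u : R) : 'M[{poly R}]_2 := @Tm _ 'X u%:P.
Definition G {R : comRingType} (N : nat) (a : nat -> R) : {poly R} :=
  \tr (\prod_(i < 2 * N) Tp (a i.+1)).

Lemma G_inv (R : comRingType) (N : nat) (a abar : nat -> R) :
  (0 < N)%N -> periodic N a -> periodic N abar ->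
  (forall n : nat, (n < N)%N ->
     abar (2 * n + 2 * N - 1)%N + abar (2 * n)%N = a (2 * n)%N + a (2 * n + 1)%N /\
     abar (2 * n)%N * abar (2 * n + 1)%N = a (2 * n + 1)%N * a (2 * n + 2)%N) ->
  G N abar = G N a.
Proof.
move=> N0 pa pb rel.
pose E j := @Dm _ 'X ((a (2 * j)%N - abar (2 * j + 2 * N - 1)%N)%:P).
pose E' j := @Dm _ 'X (- (a (2 * j)%N - abar (2 * j + 2 * N - 1)%N)%:P).
have KE : (2 * N = (2 * N).-1.+1)%N by lia.
have -> : G N abar = \tr (\prod_(i < 2 * N) Tp (abar i)).
  rewrite /G KE; symmetry; apply: (@tr_shift _ (fun i => Tp (abar i))); rewrite -KE.
  by rewrite -[(2 * N)%N]add0n pb.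
rewrite /G (prod_pair _ (fun i => Tp (abar i))) (prod_pair _ (fun i => Tp (a i.+1))).
apply: (@tr_conj _ _ _ (E 0%N) (E' 0%N)); last 2 first.
- exact: local_inv.
- exact: local_inv'.
have EN : E N = E 0%N.
  have pa0 : a (2 * N)%N = a 0%N by rewrite -[(2 * N)%N]add0n pa.
  rewrite /E muln0 add0n pa0.
  have -> : (2 * N + 2 * N - 1 = (2 * N - 1) + 2 * N)%N by lia.
  by rewrite pb.
rewrite -{1}EN; apply: (@telescope _ (fun j => Tp (abar (2 * j)%N) * Tp (abar (2 * j).+1)) (fun j => Tp (a (2 * j).+1) * Tp (a (2 * j).+2))) => j jN.
have [r1 r2] := rel j jN.
have -> : E j.+1 = @Dm _ 'X ((a (2 * j).+2)%:P - (abar (2 * j).+1)%:P).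
  rewrite /E -rmorphB.
  have -> : (2 * j.+1 + 2 * N - 1 = (2 * j).+1 + 2 * N)%N by lia.
  rewrite pb.
  by have -> : (2 * j.+1 = (2 * j).+2)%N by lia.
have -> : E j = @Dm _ 'X ((abar (2 * j))%:P - (a (2 * j).+1)%:P).
  rewrite /E -rmorphB.
  have -> : a (2 * j)%N - abar (2 * j + 2 * N - 1)%N = abar (2 * j)%N - a (2 * j).+1.
    by apply: aux; rewrite addn1 in r1.
  by [].
rewrite /Tp; apply: local_rel.
rewrite -!rmorphM; congr _%:P.
by rewrite addn1 addn2 in r2.
Qed.
Definition getf {K : nat} (f : {ffun 'I_K -> 'I_2}) (j : nat) : 'I_2 :=
  if (insub j : option 'I_K) is Some x then f x else ord0.
Definition st {K : nat} (f : {ffun 'I_K -> 'I_2}) (m : nat) (t : 'I_2) (j : nat) : 'I_2 :=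
  if (j < m)%N then getf f j else t.
Definition supp {K : nat} (f : {ffun 'I_K -> 'I_2}) (m : nat) : bool :=
  [forall i : 'I_K, (m <= i)%N ==> (f i == ord0)].

Lemma getf_ord K (f : {ffun 'I_K -> 'I_2}) (x : 'I_K) : getf f x = f x.
Proof. by rewrite /getf valK. Qed.

Section Path.
Variable S : comRingType.
Variable K : nat.

Lemma path_exp (M : nat -> 'M[S]_2) m : (m <= K)%N -> forall s t,
  (\prod_(i < m) M i) s t =
  \sum_(f : {ffun 'I_K -> 'I_2} | supp f m)
     ((st f m t 0 == s)%:R * \prod_(i < m) M i (st f m t i) (st f m t i.+1)).
Proof.
elim: m => [|m IH] Hm s t.
  rewrite big_ord0 (big_pred1 [ffun => ord0]) => [|f].
    by rewrite big_ord0 mulr1 /st /= mxE eq_sym.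
  apply/forallP/eqP => [H|->]; last by move=> i; rewrite ffunE.
  by apply/ffunP => i; rewrite ffunE; apply/eqP; have := H i.
have mK : (m < K)%N by [].
pose mo := Ordinal mK.
pose upd (u : 'I_2) (f : {ffun 'I_K -> 'I_2}) := [ffun i => if i == mo then u else f i].
pose clr (g : {ffun 'I_K -> 'I_2}) := [ffun i => if i == mo then ord0 else g i].
have getf_upd u f j : getf (upd u f) j = if j == m then u else getf f j.
  rewrite /getf; case: insubP => [x _ <-|].
    by rewrite ffunE -(inj_eq val_inj).
  by case: eqP => // ->; rewrite mK.
have st_upd u f j : (j <= m)%N -> st (upd u f) m.+1 t j = st f m u j.
  move=> jm; rewrite /st getf_upd ltnS jm.
  case: (ltnP j m) => [jm'|mj]; first by rewrite (ltn_eqF jm').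
  have -> : j = m by apply/eqP; rewrite eqn_leq jm mj.
  by rewrite eqxx.
have st_upd1 u f : st (upd u f) m.+1 t m.+1 = t by rewrite /st ltnn.
rewrite big_ord_recr /= -mulmxE mxE.
transitivity (\sum_(u < 2) \sum_(f : {ffun 'I_K -> 'I_2} | supp f m)
   ((st f m u 0 == s)%:R * \prod_(i < m) M i (st f m u i) (st f m u i.+1) * M m u t)).
  by apply: eq_bigr => u _; rewrite IH ?(ltnW Hm) // big_distrl.
rewrite (partition_big (fun g : {ffun 'I_K -> 'I_2} => g mo) predT) //=.
apply: eq_bigr => u _; symmetry.
rewrite (reindex_onto (upd u) clr) => [|g /andP[_ /eqP gu]]; last first.
  by apply/ffunP => i; rewrite !ffunE; case: eqP => // ->.
apply: eq_big => f.
  apply/idP/idP.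
    case/andP => [/andP[/forallP Hs _] /eqP Hc].
    apply/forallP => i; apply/implyP => mi.
    case: (i =P mo) => [->|ne].
      by rewrite -Hc ffunE eqxx.
    have mi' : (m.+1 <= i)%N.
      rewrite ltn_neqAle mi andbT; apply/eqP => E; apply: ne; exact: val_inj.
    by have := implyP (Hs i) mi'; rewrite ffunE (introF eqP ne).
  move/forallP => Hf; rewrite -andbA; apply/and3P; split.
  - apply/forallP => i; apply/implyP => mi; rewrite ffunE.
    have -> : (i == mo) = false.
      by apply/eqP => E; move: mi; rewrite E /= ltnn.
    by apply: (implyP (Hf i)); apply: ltnW.
  - by rewrite ffunE eqxx.
  - apply/eqP/ffunP => i; rewrite !ffunE; case: eqP => // ->.
    by apply/esym/eqP; apply: (implyP (Hf mo)) => /=.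
move=> _.
rewrite st_upd // big_ord_recr /= st_upd // st_upd1 mulrA.
congr (_ * _ * _); last by rewrite /st ltnn.
apply: eq_bigr => i _.
by rewrite !st_upd // ltnW.
Qed.

Lemma tr_exp (M : nat -> 'M[S]_2) : (0 < K)%N ->
  \tr (\prod_(i < K) M i) =
  \sum_(f : {ffun 'I_K -> 'I_2}) \prod_(i < K) M i (getf f (i %% K)) (getf f (i.+1 %% K)).
Proof.
move=> K0; rewrite /mxtrace.
under eq_bigr do rewrite path_exp //.
rewrite exchange_big /=; apply: eq_big => [f|f _].
  by apply/forallP => i; apply/implyP; rewrite leqNgt ltn_ord.
have g0 : forall s, st f K s 0 = getf f 0 by move=> s; rewrite /st K0.
rewrite (bigD1 (getf f 0)) //= g0 eqxx mul1r.
rewrite [X in _ + X]big1 ?addr0; last first.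
  by move=> s Hs; rewrite g0 eq_sym (negbTE Hs) mul0r.
apply: eq_bigr => i _; congr (M _ _ _).
  by rewrite /st ltn_ord modn_small.
rewrite /st; case: (ltnP i.+1 K) => iK.
  by rewrite modn_small.
have -> : i.+1 = K by apply/eqP; rewrite eqn_leq iK ltn_ord.
by rewrite modnn.
Qed.
End Path.

Definition cf {K : nat} (f : {ffun 'I_K -> 'I_2}) (j : nat) : bool :=
  (getf f (j %% K) == 1 :> nat).
Definition valid {K : nat} (f : {ffun 'I_K -> 'I_2}) : bool :=
  [forall i : 'I_K, ~~ (cf f i && cf f i.+1)].
Definition wt {R : comRingType} {K : nat} (a : nat -> R) (f : {ffun 'I_K -> 'I_2}) : R :=
  \prod_(i : 'I_K | cf f i) a i.+1.
Definition cnt {K : nat} (f : {ffun 'I_K -> 'I_2}) : nat := #|[pred i : 'I_K | cf f i]|.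

Lemma G_sum (R : comRingType) (N : nat) (a : nat -> R) k : (0 < N)%N ->
  (G N a)`_k = \sum_(f : {ffun 'I_(2 * N) -> 'I_2} | valid f && (cnt f == k)) wt a f.
Proof.
move=> N0; rewrite /G (@tr_exp _ _ (fun i => Tp (a i.+1))) ?muln_gt0 // coef_sum [RHS]big_mkcond.
apply: eq_bigr => f _.
case: (boolP (valid f)) => V /=.
  rewrite (eq_bigr (fun i : 'I_(2 * N) => if cf f i then (a i.+1)%:P * 'X else 1)); last first.
    move=> i _; rewrite mxE; move/forallP: V => /(_ i).
    by rewrite /cf; case: eqP => //= _; case: eqP.
  rewrite -big_mkcond big_split /= -rmorph_prod.
  have -> : \prod_(i < 2 * N | cf f i) ('X : {poly R}) = 'X ^+ cnt f.
    by rewrite /cnt -prodr_const; apply: eq_bigl => i; rewrite inE.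
  by rewrite coefCM coefXn eq_sym /wt; case: eqP => _; rewrite ?mulr1 ?mulr0.
move/forallPn: V => [i]; rewrite negbK => /andP[c1 c2].
rewrite (bigD1 i) //= mxE.
by move: c1 c2; rewrite /cf => -> ->; rewrite mul0r coef0.
Qed.
Section NatLemmas.
Local Open Scope nat_scope.
Definition gap (x y : nat) : bool := x.+1 < y.
Lemma gap_trans : transitive gap.
Proof. rewrite /gap => y x z H1 H2; lia. Qed.

Lemma L1 s x : sorted gap s -> x \in s -> x.+1 \in s -> False.
Proof.
elim: s => [|b s IH] //= Hp; rewrite !inE.
have := Hp; rewrite (path_sortedE gap_trans) => /andP[/allP Ha Hs].
case/orP=> [/eqP xb|xs]; case/orP=> [/eqP xb'|xs'].
- lia.
- by have := Ha _ xs'; rewrite /gap xb ltnn.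
- by have := Ha _ xs; rewrite /gap -xb'; lia.
- exact: IH Hs xs xs'.
Qed.

Lemma L4 s : sorted ltn s -> {in s, forall x, x.+1 \notin s} -> sorted gap s.
Proof.
elim: s => [|b s IH] //= Hp Hn.
have := Hp; rewrite (path_sortedE ltn_trans) => /andP[/allP Ha Hs].
rewrite (path_sortedE gap_trans); apply/andP; split.
  apply/allP => y ys; rewrite /gap ltn_neqAle Ha // andbT.
  apply/eqP => E; have := Hn b; rewrite inE eqxx E inE ys orbT; by move=> /(_ isT).
apply: IH => // x xs; have := Hn x; rewrite !inE xs orbT => /(_ isT).
by rewrite negb_or => /andP[].
Qed.

Lemma L2 s : sorted ltn s -> 0 \in s -> nth 0 s 0 = 0.
Proof.
case: s => [|b s] //= Hp; rewrite inE => /orP[/eqP <-//|zs].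
by move: Hp; rewrite (path_sortedE ltn_trans) => /andP[/allP /(_ _ zs)].
Qed.

Lemma L3 K s : sorted ltn s -> all (fun x => x < K) s -> K.-1 \in s -> last 0 s = K.-1.
Proof.
elim: s 0 => [|b s IH] //= d Hp /andP[bK sK]; rewrite inE => /orP[/eqP E|ks].
  case: s Hp sK {IH} => [|c s] //= /andP[bc _] /andP[cK _]; lia.
apply: IH => //; exact: path_sorted Hp.
Qed.
Lemma inc K (Q : pred nat) : sorted ltn (map val (enum [pred i : 'I_K | Q i])).
Proof.
rewrite /enum_mem -enumT /= -(filter_map val Q) val_enum_ord.
exact: sorted_filter ltn_trans _ _ (iota_ltn_sorted _ _).
Qed.

End NatLemmas.

Lemma hsum_sum (R : numDomainType) (N : nat) (a : nat -> R) k : (0 < N)%N ->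
  hsum N k a = \sum_(f : {ffun 'I_(2 * N) -> 'I_2} | valid f && (cnt f == k)) wt a f.
Proof.
move=> N0.
set K := (2 * N)%N.
have K0 : (0 < K)%N by rewrite muln_gt0.
have K1 : (1 < K)%N by rewrite /K; lia.
pose x0 := Ordinal K0.
pose o1 : 'I_2 := ord_max.
pose fT (t : k.-tuple 'I_K) : {ffun 'I_K -> 'I_2} := [ffun i => if i \in t then o1 else ord0].
pose A (f : {ffun 'I_K -> 'I_2}) := [pred i : 'I_K | cf f i].
pose tF (f : {ffun 'I_K -> 'I_2}) : k.-tuple 'I_K := [tuple of mkseq (nth x0 (enum (A f))) k].
have val_tF f : cnt f = k -> val (tF f) = enum (A f).
  by move=> ck; rewrite /= -[in RHS](mkseq_nth x0 (enum (A f))) -cardE -ck.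
have cfT t j : cf (fT t) j = ((j %% K)%N \in map val t).
  rewrite /cf /getf; case: insubP => [x _ <-|].
    by rewrite ffunE (mem_map val_inj); case: (x \in t).
  by rewrite ltn_mod K0.
have cfTi t (i : 'I_K) : cf (fT t) i = (i \in t).
  by rewrite cfT modn_small // (mem_map val_inj).
have sK (t : k.-tuple 'I_K) : all (fun x => (x < K)%N) (map val t).
  by rewrite all_map; apply/allP => y _ /=.
rewrite /hsum [RHS](reindex_onto fT tF) => [|f /andP[V /eqP C]]; last first.
  apply/ffunP => i; rewrite ffunE memtE val_tF // mem_enum inE /cf /getf modn_small // valK.
  by case: (f i) => [[|[|v]] Hv] //; apply: val_inj.
apply: eq_big => t.
  rewrite /admissible -/K.
  set s := map val t.
  have cnt_t : uniq t -> cnt (fT t) = k.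
    move=> ut; rewrite /cnt -(size_tuple t) -(card_uniqP ut).
    by apply: eq_card => i; rewrite inE cfTi.
  have tF_t : sorted ltn s -> tF (fT t) = t.
    move=> Hs.
    have ut : uniq t.
      by rewrite -(map_inj_uniq val_inj); apply: (sorted_uniq ltn_trans ltnn).
    apply: val_inj; rewrite /= -[LHS]/(val (tF (fT t))) val_tF ?cnt_t //.
    apply: (inj_map val_inj); apply: (irr_sorted_eq ltn_trans ltnn) => //; first exact: inc.
    move=> y; apply/mapP/mapP => [[x] xA ->|[x] xt ->]; exists x => //.
      by move: xA; rewrite mem_enum inE cfTi.
    by rewrite mem_enum inE cfTi.
  apply/idP/idP.
    case/andP => Hg Hw.
    have Hs : sorted ltn s by apply: sub_sorted Hg => x y /=; lia.
    have ut : uniq t.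
      by rewrite -(map_inj_uniq val_inj); apply: (sorted_uniq ltn_trans ltnn).
    rewrite cnt_t // eqxx andbT tF_t // eqxx andbT.
    apply/forallP => i; rewrite cfTi cfT.
    apply/negP => /andP[it Hn].
    case: (ltnP i.+1 K) => iK.
      rewrite modn_small // in Hn.
      by apply: (@L1 s i Hg) => //; rewrite (mem_map val_inj).
    have iK' : i.+1 = K by apply/eqP; rewrite eqn_leq iK ltn_ord.
    rewrite iK' modnn in Hn.
    apply: (negP Hw); apply/andP; split; apply/eqP; first exact: L2 Hs Hn.
    apply: L3 Hs (sK t) _.
    by rewrite -iK' /= (mem_map val_inj).
  case/andP => [/andP[V /eqP C] /eqP E].
  have Hs : sorted ltn s.
    by rewrite /s -E -[map val _]/(map val (val (tF (fT t)))) val_tF //; exact: inc.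
  apply/andP; split.
    change (sorted gap s); apply: (@L4 s Hs) => x xs; apply/negP => x1s.
    have xK : (x.+1 < K)%N by have := allP (sK t) _ x1s.
    move: xs => /mapP[i it xi].
    have := forallP V i; rewrite !cfT modn_small // (mem_map val_inj) it /=.
    by rewrite -xi modn_small // x1s.
  apply/negP => /andP[/eqP h0 /eqP hl].
  have sn : s != [::].
    by apply/eqP => Es; move: hl; rewrite Es /=; lia.
  have m0 : 0%N \in s by rewrite -h0 mem_nth // lt0n size_eq0.
  have mK : K.-1 \in s.
    by rewrite -hl; case: (s) sn => [//|y s'] _; exact: mem_last.
  have Hi : (K.-1 < K)%N by rewrite prednK.
  have := forallP V (Ordinal Hi); rewrite !cfT /= modn_small // mK /=.
  by rewrite prednK // modnn m0.
move=> /andP[Hs _].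
have ut : uniq t.
  rewrite -(map_inj_uniq val_inj); apply: (sorted_uniq ltn_trans ltnn).
  by apply: sub_sorted Hs => x y; rewrite /=; lia.
rewrite big_uniq // /wt; apply: eq_bigl => i.
by rewrite cfTi.
Qed.

Lemma prod_shift (R : comRingType) (F : nat -> R) m : F 0%N = F m.+1 ->
  \prod_(i < m.+1) F i = \prod_(i < m.+1) F i.+1.
Proof.
move=> H; rewrite big_ord_recl big_ord_recr /= mulrC H.
by congr (_ * _); apply: eq_bigr => i _.
Qed.

Theorem mainTheorem2 (R : realFieldType) (N : nat) (a abar : nat -> R) :
  (3 <= N)%N ->
  periodic N a -> periodic N abar ->
  (forall i : nat, 0 < a i) -> (forall i : nat, 0 < abar i) ->
  (forall n : nat, (n < N)%N ->
     abar (2 * n + 2 * N - 1)%N + abar (2 * n)%N = a (2 * n)%N + a (2 * n + 1)%N /\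
     abar (2 * n)%N * abar (2 * n + 1)%N = a (2 * n + 1)%N * a (2 * n + 2)%N) ->
  forall k : nat, (1 <= k <= N.+1)%N -> h N k abar = h N k a.
Proof.
move=> N3 pa pb _ _ rel k _.
have N0 : (0 < N)%N by lia.
rewrite /h; case: eqP => _; last first.
  by rewrite !hsum_sum // -!G_sum // (@G_inv _ N a abar N0 pa pb rel).
have KE : (2 * N = (2 * N).-1.+1)%N by lia.
have -> : \prod_(i < 2 * N) abar i.+1 = \prod_(i < 2 * N) abar i.
  rewrite KE; symmetry; apply: (@prod_shift _ abar); rewrite -KE.
  by rewrite -[(2 * N)%N]add0n pb.
rewrite (prod_pair _ abar) (prod_pair _ (fun i => a i.+1)).
apply: eq_bigr => j _.
have [_ r2] := rel j (ltn_ord j).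
by rewrite addn1 addn2 in r2.
Qed.
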